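(* Let $G$ be a group and $O'\subset O$ two equipments of $G$ with $O$ finite, such that the elements of $O'$ generate $G$. Then $a_{(G,O)}\le a_{(G,O')}$; in particular, if $a_{(G,O')}=1$ then $a_{(G,O)}=1$.
   Context: An equipment of $G$ is a subset which is a union of finitely many conjugacy classes of $G$ and does not contain $1$. For an equipment $O$ generating $G$, let $\widehat G_O$ be the group with generators $y_g$ ($g\in O$) and relations $y_h^{-1}y_gy_h=y_{h^{-1}gh}$ for all $g,h\in O$, and $\beta:\widehat G_O\to G$, $y_g\mapsto g$, with kernel $H$ (central). The ambiguity index is $a_{(G,O)}=|H\cap[\widehat G_O,\widehat G_O]|$. *)

(* Defs.v *)
(* The groups \widehat G_O are
   built as group presentations: words over O modulo the congruence generated
   by free cancellation and the relations y_h^{-1} y_g y_h = y_{h^{-1} g h}. *)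
From Stdlib Require Import List Bool.
Import ListNotations.

Record Group := {
  carrier :> Type;
  gmul : carrier -> carrier -> carrier;
  ginv : carrier -> carrier;
  gone : carrier;
  gmulA : forall x y z, gmul x (gmul y z) = gmul (gmul x y) z;
  gmul1l : forall x, gmul gone x = x;
  gmulVl : forall x, gmul (ginv x) x = gone
}.

Section Defs.
Variable G : Group.

Definition gconj (g h : G) : G := gmul G (ginv G h) (gmul G g h).

Definition equipment (O : G -> Prop) : Prop :=
  (forall g h, O g -> O (gconj g h)) /\
  ~ O (gone G) /\
  (exists reps : list G, forall x, O x <-> exists c h, In c reps /\ x = gconj c h).

Definition finite_set (O : G -> Prop) : Prop :=
  exists l : list G, forall x, O x <-> In x l.

(* a letter (g, b) stands for y_g if b = false and y_g^{-1} if b = true *)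
Definition letter := (G * bool)%type.
Definition word := list letter.

Definition eval_letter (l : letter) : G :=
  if snd l then ginv G (fst l) else fst l.

(* the image under beta : y_g |-> g *)
Definition eval (w : word) : G :=
  fold_right (fun l acc => gmul G (eval_letter l) acc) (gone G) w.

Definition word_on (O : G -> Prop) (w : word) : Prop :=
  Forall (fun l => O (fst l)) w.

Definition generates (O : G -> Prop) : Prop :=
  forall x : G, exists w, word_on O w /\ eval w = x.

Inductive hequiv (O : G -> Prop) : word -> word -> Prop :=
| hequiv_refl : forall w, hequiv O w w
| hequiv_sym : forall u v, hequiv O u v -> hequiv O v u
| hequiv_trans : forall u v w, hequiv O u v -> hequiv O v w -> hequiv O u w
| hequiv_cat : forall u u' v v', hequiv O u u' -> hequiv O v v' ->
    hequiv O (u ++ v) (u' ++ v')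
| hequiv_cancel : forall g b, O g -> hequiv O [(g, b); (g, negb b)] []
| hequiv_rel : forall g h, O g -> O h ->
    hequiv O [(h, true); (g, false); (h, false)] [(gconj g h, false)].

Definition inv_word (w : word) : word :=
  rev (map (fun l => (fst l, negb (snd l))) w).

Definition comm_word (u v : word) : word :=
  inv_word u ++ inv_word v ++ u ++ v.

Definition in_comm (O : G -> Prop) (w : word) : Prop :=
  exists ps : list (word * word),
    Forall (fun p => word_on O (fst p) /\ word_on O (snd p)) ps /\
    hequiv O w (concat (map (fun p => comm_word (fst p) (snd p)) ps)).

(* representatives of elements of H \cap [\widehat G_O, \widehat G_O], H = ker beta *)
Definition amb_set (O : G -> Prop) (w : word) : Prop :=
  word_on O w /\ eval w = gone G /\ in_comm O w.

(* a_{(G,O)} <= a_{(G,O')} as cardinals: an injection between the quotient sets *)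
Definition amb_le (O O' : G -> Prop) : Prop :=
  exists f : word -> word,
    (forall w, amb_set O w -> amb_set O' (f w)) /\
    (forall w1 w2, amb_set O w1 -> amb_set O w2 ->
        hequiv O w1 w2 -> hequiv O' (f w1) (f w2)) /\
    (forall w1 w2, amb_set O w1 -> amb_set O w2 ->
        hequiv O' (f w1) (f w2) -> hequiv O w1 w2).

Definition amb_one (O : G -> Prop) : Prop :=
  forall w, amb_set O w -> hequiv O w [].

End Defs.

Arguments gconj {G}.
Arguments equipment {G}.
Arguments finite_set {G}.
Arguments generates {G}.
Arguments amb_le {G}.
Arguments amb_one {G}.

(* Main.v *)
Require Import Defs.
From Stdlib Require Import List Bool Setoid Morphisms RelationClasses.
From Stdlib Require Import ClassicalEpsilon FunctionalExtensionality PropExtensionality.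
Import ListNotations.

Section GroupLemmas.
Variable G : Group.

Lemma cancel_l (a x y : G) : gmul G a x = gmul G a y -> x = y.
Proof.
  intro H. rewrite <- (gmul1l G x), <- (gmul1l G y), <- (gmulVl G a), <- !gmulA, H.
  reflexivity.
Qed.

Lemma mul1r (x : G) : gmul G x (gone G) = x.
Proof.
  apply (cancel_l (ginv G x)). rewrite gmulA, gmulVl, gmul1l. reflexivity.
Qed.

Lemma mulgV (x : G) : gmul G x (ginv G x) = gone G.
Proof.
  apply (cancel_l (ginv G x)). rewrite gmulA, gmulVl, gmul1l, mul1r. reflexivity.
Qed.

Lemma invinv (x : G) : ginv G (ginv G x) = x.
Proof. apply (cancel_l (ginv G x)). rewrite gmulVl, mulgV. reflexivity. Qed.

Lemma invmul (x y : G) : ginv G (gmul G x y) = gmul G (ginv G y) (ginv G x).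
Proof.
  apply (cancel_l (gmul G x y)). rewrite mulgV.
  rewrite <- gmulA, (gmulA G y), mulgV, gmul1l, mulgV. reflexivity.
Qed.

Lemma inv1 : ginv G (gone G) = gone G.
Proof. rewrite <- (mul1r (ginv G (gone G))). apply gmulVl. Qed.

Lemma conj1 (a : G) : gconj a (gone G) = a.
Proof. unfold gconj. rewrite inv1, mul1r, gmul1l. reflexivity. Qed.

Lemma conjconj (a x y : G) : gconj (gconj a x) y = gconj a (gmul G x y).
Proof. unfold gconj. rewrite invmul. rewrite !gmulA. reflexivity. Qed.

Lemma conjback (a h : G) : gconj (gconj a (ginv G h)) h = a.
Proof. rewrite conjconj, gmulVl, conj1. reflexivity. Qed.

Lemma eval_app (u v : word G) : eval G (u ++ v) = gmul G (eval G u) (eval G v).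
Proof.
  induction u as [|l u IH]; simpl; [rewrite gmul1l; reflexivity|].
  rewrite IH, gmulA. reflexivity.
Qed.

Lemma inv_word_app (u v : word G) : inv_word G (u ++ v) = inv_word G v ++ inv_word G u.
Proof. unfold inv_word. rewrite map_app, rev_app_distr. reflexivity. Qed.

Lemma inv_word_cons (l : letter G) (u : word G) :
  inv_word G (l :: u) = inv_word G u ++ [(fst l, negb (snd l))].
Proof. reflexivity. Qed.

Lemma inv_inv (u : word G) : inv_word G (inv_word G u) = u.
Proof.
  unfold inv_word. rewrite map_rev, rev_involutive, map_map.
  induction u as [|[g b] u IH]; simpl; [reflexivity|]. rewrite negb_involutive. f_equal. exact IH.
Qed.

Lemma word_on_app (O : G -> Prop) u v : word_on G O u -> word_on G O v -> word_on G O (u ++ v).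
Proof. intros. apply Forall_app; auto. Qed.

Lemma word_on_inv (O : G -> Prop) u : word_on G O u -> word_on G O (inv_word G u).
Proof.
  intro H. unfold inv_word. apply Forall_rev. apply Forall_map.
  eapply Forall_impl; [|exact H]. simpl. auto.
Qed.

Lemma word_on_mono (O O' : G -> Prop) u : (forall x, O' x -> O x) -> word_on G O' u -> word_on G O u.
Proof. intros H1 H2. eapply Forall_impl; [|exact H2]. simpl; auto. Qed.

Lemma hequiv_mono (O O' : G -> Prop) u v : (forall x, O' x -> O x) -> hequiv G O' u v -> hequiv G O u v.
Proof.
  intros Hs H. induction H.
  - apply hequiv_refl.
  - apply hequiv_sym; auto.
  - eapply hequiv_trans; eauto.
  - apply hequiv_cat; auto.
  - apply hequiv_cancel; auto.
  - apply hequiv_rel; auto.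
Qed.

Lemma hequiv_eval (O : G -> Prop) u v : hequiv G O u v -> eval G u = eval G v.
Proof.
  intro H. induction H; try congruence.
  - rewrite !eval_app; congruence.
  - destruct b; simpl; rewrite mul1r; [apply gmulVl | apply mulgV].
  - simpl. rewrite !mul1r. reflexivity.
Qed.

End GroupLemmas.

Global Instance heq_Equivalence (G : Group) (O : G -> Prop) : Equivalence (hequiv G O).
Proof.
  split.
  - intro; apply hequiv_refl.
  - intros x y; apply hequiv_sym.
  - intros x y z; apply hequiv_trans.
Qed.

Global Instance app_Proper (G : Group) (O : G -> Prop) :
  Proper (hequiv G O ==> hequiv G O ==> hequiv G O) (@app (letter G)).
Proof. intros u u' Hu v v' Hv. apply hequiv_cat; auto. Qed.

Global Instance cons_Proper (G : Group) (O : G -> Prop) :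
  Proper (eq ==> hequiv G O ==> hequiv G O) (@cons (letter G)).
Proof.
  intros l l' <- v v' Hv. change (hequiv G O ([l] ++ v) ([l] ++ v')).
  apply hequiv_cat; [reflexivity|auto].
Qed.

Section Heq.
Variable G : Group.
Variable O : G -> Prop.
Hypothesis HO : forall g h, O g -> O (gconj g h).

Lemma C_ft (g : G) r : O g -> hequiv G O ((g, false) :: (g, true) :: r) r.
Proof.
  intro Hg. change (hequiv G O ([(g, false); (g, negb false)] ++ r) ([] ++ r)).
  apply hequiv_cat; [apply hequiv_cancel; auto | reflexivity].
Qed.

Lemma C_tf (g : G) r : O g -> hequiv G O ((g, true) :: (g, false) :: r) r.
Proof.
  intro Hg. change (hequiv G O ([(g, true); (g, negb true)] ++ r) ([] ++ r)).
  apply hequiv_cat; [apply hequiv_cancel; auto | reflexivity].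
Qed.

Lemma C1 (g : G) b r : O g -> hequiv G O ((g, b) :: (g, negb b) :: r) r.
Proof. destruct b; simpl; [apply C_tf | apply C_ft]. Qed.

Lemma C1' (g : G) b r : O g -> hequiv G O ((g, negb b) :: (g, b) :: r) r.
Proof. destruct b; simpl; [apply C_ft | apply C_tf]. Qed.

Lemma L1a w r : word_on G O w -> hequiv G O (w ++ inv_word G w ++ r) r.
Proof.
  intro Hw. revert r. induction Hw as [|[g b] w Hg Hw IH]; intro r.
  - reflexivity.
  - rewrite inv_word_cons. simpl fst; simpl snd.
    rewrite <- !app_assoc. cbn [app].
    rewrite IH. apply C1. exact Hg.
Qed.

Lemma L1b w r : word_on G O w -> hequiv G O (inv_word G w ++ w ++ r) r.
Proof.
  intro Hw. revert r. induction Hw as [|[g b] w Hg Hw IH]; intro r.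
  - reflexivity.
  - rewrite inv_word_cons. simpl fst; simpl snd.
    rewrite <- !app_assoc. cbn [app].
    rewrite C1'; auto.
Qed.

Lemma inv_proper x y : word_on G O x -> word_on G O y -> hequiv G O x y ->
  hequiv G O (inv_word G x) (inv_word G y).
Proof.
  intros Hx Hy H.
  transitivity (inv_word G x ++ (y ++ (inv_word G y ++ []))).
  { rewrite (L1a y); auto. rewrite app_nil_r. reflexivity. }
  transitivity (inv_word G x ++ (x ++ (inv_word G y ++ []))).
  { apply hequiv_cat; [reflexivity|]. apply hequiv_cat; [symmetry; exact H|reflexivity]. }
  rewrite (L1b x); auto. rewrite app_nil_r. reflexivity.
Qed.

Lemma conj_letter (h a : G) b r : O h -> O a ->
  hequiv G O ((h, negb b) :: (a, false) :: (h, b) :: r)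
             ((gconj a (eval_letter G (h, b)), false) :: r).
Proof.
  intros Hh Ha.
  change (hequiv G O ([(h, negb b); (a, false); (h, b)] ++ r)
                     ([(gconj a (eval_letter G (h, b)), false)] ++ r)).
  apply hequiv_cat; [|reflexivity].
  destruct b; simpl.
  - set (c := gconj a (ginv G h)).
    assert (Hc : O c) by (apply HO; auto).
    transitivity ((h, false) :: ([(h, true); (c, false); (h, false)] ++ [(h, true)])).
    { apply cons_Proper; [reflexivity|].
      rewrite (hequiv_rel G O c h Hc Hh). unfold c. rewrite conjback. reflexivity. }
    simpl. rewrite C_ft; auto. rewrite C_ft; auto. reflexivity.
  - apply hequiv_rel; auto.
Qed.

Definition conjw (x : G) (u : word G) : word G :=
  map (fun l => (gconj (fst l) x, snd l)) u.

Lemma L2f w : word_on G O w -> forall a, O a ->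
  hequiv G O (inv_word G w ++ (a, false) :: w) [(gconj a (eval G w), false)].
Proof.
  intro Hw. induction Hw as [|[h b] w Hh Hw IH]; intros a Ha.
  - simpl. rewrite conj1. reflexivity.
  - rewrite inv_word_cons. simpl fst; simpl snd. rewrite <- app_assoc. simpl app.
    rewrite conj_letter; auto.
    rewrite IH; [|apply HO; auto].
    simpl eval. rewrite conjconj. reflexivity.
Qed.

Lemma L2 w a b : word_on G O w -> O a ->
  hequiv G O (inv_word G w ++ (a, b) :: w) [(gconj a (eval G w), b)].
Proof.
  intros Hw Ha. destruct b; [|apply L2f; auto].
  assert (E : inv_word G (inv_word G w ++ (a, false) :: w) = inv_word G w ++ (a, true) :: w).
  { rewrite inv_word_app, inv_word_cons, inv_inv. simpl. rewrite <- app_assoc. reflexivity. }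
  rewrite <- E. change [(gconj a (eval G w), true)] with (inv_word G [(gconj a (eval G w), false)]).
  apply inv_proper.
  - apply word_on_app; [apply word_on_inv; auto|]. constructor; auto.
  - constructor; [apply HO; auto| constructor].
  - apply L2f; auto.
Qed.

Lemma L2W u v : word_on G O u -> word_on G O v ->
  hequiv G O (inv_word G v ++ u ++ v) (conjw (eval G v) u).
Proof.
  intros Hu Hv. induction Hu as [|[a b] u Ha Hu IH].
  - simpl. transitivity (inv_word G v ++ v ++ []).
    { rewrite app_nil_r. reflexivity. }
    rewrite (L1b v []); auto. reflexivity.
  - transitivity (inv_word G v ++ (a, b) :: (v ++ inv_word G v ++ (u ++ v))).
    { rewrite (L1a v); auto. reflexivity. }
    replace (inv_word G v ++ (a, b) :: (v ++ inv_word G v ++ (u ++ v)))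
      with ((inv_word G v ++ (a, b) :: v) ++ (inv_word G v ++ u ++ v))
      by (rewrite <- app_assoc; reflexivity).
    rewrite L2; auto. rewrite IH. reflexivity.
Qed.

Lemma word_on_comm u v : word_on G O u -> word_on G O v -> word_on G O (comm_word G u v).
Proof.
  intros. unfold comm_word.
  repeat apply word_on_app; auto; apply word_on_inv; auto.
Qed.

Lemma comm_right u v v' : word_on G O u -> word_on G O v -> word_on G O v' ->
  eval G v = eval G v' -> hequiv G O (comm_word G u v) (comm_word G u v').
Proof.
  intros Hu Hv Hv' E. unfold comm_word.
  rewrite (L2W u v), (L2W u v'); auto. rewrite E. reflexivity.
Qed.

Lemma comm_swap u v : comm_word G u v = inv_word G (comm_word G v u).
Proof.
  unfold comm_word. rewrite !inv_word_app, !inv_inv. rewrite <- !app_assoc. reflexivity.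
Qed.

Lemma comm_both u v u' v' : word_on G O u -> word_on G O v -> word_on G O u' -> word_on G O v' ->
  eval G u = eval G u' -> eval G v = eval G v' ->
  hequiv G O (comm_word G u v) (comm_word G u' v').
Proof.
  intros Hu Hv Hu' Hv' Eu Ev.
  rewrite (comm_right u v v'); auto.
  rewrite (comm_swap u v'), (comm_swap u' v').
  apply inv_proper; try apply word_on_comm; auto.
  apply comm_right; auto.
Qed.

End Heq.

Lemma reduce_ps (G : Group) (O O' : G -> Prop) :
  (forall g h, O g -> O (gconj g h)) ->
  (forall x, O' x -> O x) -> generates O' ->
  forall ps : list (word G * word G),
    Forall (fun p => word_on G O (fst p) /\ word_on G O (snd p)) ps ->
    exists ps', Forall (fun p => word_on G O' (fst p) /\ word_on G O' (snd p)) ps' /\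
      hequiv G O (concat (map (fun p => comm_word G (fst p) (snd p)) ps))
                 (concat (map (fun p => comm_word G (fst p) (snd p)) ps')).
Proof.
  intros HO Hs Hg ps Hps. induction Hps as [|[u v] ps [Hu Hv] Hps IH].
  - exists []. split; [constructor | reflexivity].
  - destruct IH as [ps' [Hps' E]].
    destruct (Hg (eval G u)) as [u' [Hu' Eu]].
    destruct (Hg (eval G v)) as [v' [Hv' Ev]].
    exists ((u', v') :: ps'). split; [constructor; auto|].
    simpl. rewrite E.
    apply hequiv_cat; [|reflexivity].
    apply comm_both; auto; try (eapply word_on_mono; eauto); congruence.
Qed.

Theorem corollary2p20 (G : Group) (O O' : G -> Prop) :
  equipment O -> equipment O' ->
  (forall x, O' x -> O x) ->
  finite_set O ->
  generates O' ->
  amb_le O O' /\ (amb_one O' -> amb_one O).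
Proof.
  intros [HO _] [HO' _] Hs _ Hg.
  assert (R : forall w, amb_set G O w -> exists w', amb_set G O' w' /\ hequiv G O w w').
  { intros w [Hw [He [ps [Hps Heq]]]].
    destruct (reduce_ps G O O' HO Hs Hg ps Hps) as [ps' [Hps' E]].
    exists (concat (map (fun p => comm_word G (fst p) (snd p)) ps')).
    split; [split; [|split]|].
    - unfold word_on. apply Forall_concat. apply Forall_map.
      eapply Forall_impl; [|exact Hps']. intros [u v] [Hu Hv]. simpl.
      apply word_on_comm; auto.
    - rewrite <- (hequiv_eval G O _ _ E), <- (hequiv_eval G O _ _ Heq). exact He.
    - exists ps'. split; [exact Hps' | reflexivity].
    - rewrite Heq. exact E. }
  split.
  - exists (fun w => epsilon (inhabits []) (fun w' => amb_set G O' w' /\ hequiv G O w w')).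
    assert (Sp : forall w, amb_set G O w ->
      amb_set G O' (epsilon (inhabits []) (fun w' => amb_set G O' w' /\ hequiv G O w w')) /\
      hequiv G O w (epsilon (inhabits []) (fun w' => amb_set G O' w' /\ hequiv G O w w'))).
    { intros w Hw. apply epsilon_spec. apply R; auto. }
    split; [|split].
    + intros w Hw. apply Sp; auto.
    + intros w1 w2 H1 H2 E.
      assert (Ep : (fun w' => amb_set G O' w' /\ hequiv G O w1 w') =
                   (fun w' => amb_set G O' w' /\ hequiv G O w2 w')).
      { apply functional_extensionality. intro w'. apply propositional_extensionality.
        split; intros [A B]; split; auto; [rewrite <- E | rewrite E]; auto. }
      cbv beta. match goal with |- hequiv _ _ ?a ?b => assert (a = b) as ->; [f_equal; exact Ep|reflexivity] end.
    + intros w1 w2 H1 H2 E.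
      destruct (Sp w1 H1) as [_ E1]. destruct (Sp w2 H2) as [_ E2].
      cbv beta in E |- *. rewrite E1, E2. eapply hequiv_mono; eauto.
  - intros H1 w Hw. destruct (R w Hw) as [w' [A E]].
    rewrite E. eapply hequiv_mono; [exact Hs|]. apply H1. exact A.
Qed.
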